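(* If $H=(\alpha,\beta)$ is a semi-norming $k$-hypergraph pair over $V$, then $\alpha(\omega)+\beta(\omega)\ge1$ for every $\omega\in{\rm supp}(\alpha)\cup{\rm supp}(\beta)$.
   Context: A $k$-hypergraph pair $H=(\alpha,\beta)$ consists of finite nonempty sets $V_1,\dots,V_k$ and functions $\alpha,\beta:V\to\mathbb{R}$, where $V=V_1\times\cdots\times V_k$; its size is $|H|=\sum_{\omega\in V}(|\alpha(\omega)|+|\beta(\omega)|)$. All measures are positive. For a measure space $\mathcal M=(\Omega,\mathcal F,\mu)$, the space $\Omega^{V_1}\times\cdots\times\Omega^{V_k}$ (points $x=(x_{i,v})_{i\in[k],v\in V_i}$) carries the product measure, and each $\omega=(\omega_1,\dots,\omega_k)\in V$ defines the projection $\omega(x)=(x_{1,\omega_1},\dots,x_{k,\omega_k})\in\Omega^k$. For measurable $f:\Omega^k\to\mathbb C$, $f^H(x)=\prod_{\omega\in V} f(\omega(x))^{\alpha(\omega)}\,\overline{f(\omega(x))^{\beta(\omega)}}$, with the convention $0^0=1$ (non-integer complex powers taken with a fixed branch). When $\alpha,\beta\ge 0$, set $\|f\|_H=(\int f^H)^{1/|H|}$, and let $L_H(\mathcal M)$ be the set of measurable $f$ with $\|\,|f|\,\|_H<\infty$. $H$ (with $\alpha,\beta\ge0$) is called norming (resp. semi-norming) if $\|\cdot\|_H$ is a norm (resp. semi-norm) on $L_H(\mathcal M)$ for every measure space $\mathcal M$. *)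

(* Defs.v *)
From mathcomp Require Import all_boot all_order all_algebra.
From mathcomp Require Import all_classical all_reals all_analysis.
From mathcomp Require Import complex.
Import Order.TTheory GRing.Theory Num.Theory.
Set Implicit Arguments.
Unset Strict Implicit.
Unset Printing Implicit Defensive.
Local Open Scope ring_scope.
Local Open Scope classical_set_scope.

Section HypergraphPairs.
Variable R : realType.
Local Notation C := R[i].

(** Complex power with the principal branch of the argument, arg in (-pi, pi];
    convention 0^0 = 1 (and 0^a = 0 for a <> 0).  For a a natural number this
    is the usual power z ^+ a. *)
Definition carg (z : C) : R :=
  let r := Num.sqrt (complex.Re z ^+ 2 + complex.Im z ^+ 2) in
  if 0 <= complex.Im z then acos (complex.Re z / r) else - acos (complex.Re z / r).

Definition cpow (z : C) (a : R) : C :=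
  if z == 0 then (a == 0)%:R
  else let r := Num.sqrt (complex.Re z ^+ 2 + complex.Im z ^+ 2) in
       Complex (powR r a * cos (a * carg z)) (powR r a * sin (a * carg z)).

Variable k : nat.
Variable V : 'I_k -> finType.

Definition Vprod := {dffun forall i : 'I_k, V i}.

Definition Coord := {i : 'I_k & V i}.

Definition hsize (alpha beta : Vprod -> R) : R :=
  \sum_(w : Vprod) (`|alpha w| + `|beta w|).

Variables (d : measure_display) (T : measurableType d).
Variable mu : {measure set T -> \bar R}.

Definition Pt := forall i : 'I_k, V i -> T.

Definition proj (w : Vprod) (x : Pt) : 'I_k -> T := fun i => x i (w i).

(** product sigma-algebra on Omega^k, generated by measurable cylinders *)
Definition cylk : set (set ('I_k -> T)) :=
  fun S => exists i A, measurable A /\ S = [set x | A (x i)].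

(** measurability of f : Omega^k -> C (Borel sigma-algebra on C = R^2) *)
Definition kmeasurable (f : ('I_k -> T) -> C) : Prop :=
  forall B : set R, measurable B ->
    <<s cylk >> ((fun x => complex.Re (f x)) @^-1` B) /\
    <<s cylk >> ((fun x => complex.Im (f x)) @^-1` B).

Definition upd (x : Pt) (j : Coord) (t : T) : Pt :=
  fun i v => if Tagged (fun i => V i) v == j then t else x i v.

Fixpoint iint (s : seq Coord) (g : Pt -> \bar R) (x : Pt) : \bar R :=
  match s with
  | [::] => g x
  | j :: s' => (\int[mu]_t iint s' g (upd x j t))%E
  end.

(** integral of a nonnegative function against the product measure mu^{V}
    (computed as an iterated integral; for sigma-finite mu this is the integral
    against the product measure, by Tonelli).  If Omega is empty, the product
    space is empty (the coordinate set is nonempty for k >= 1) and the integral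
    is 0. *)
Definition prodint (g : Pt -> \bar R) : \bar R :=
  match pselect (exists t : T, True) with
  | left H => iint (enum {: Coord}) g (fun _ _ => projT1 (cid H))
  | right _ => 0%E
  end.

Definition prodintR (u : Pt -> R) : R :=
  fine (prodint (fun x => (Num.max (u x) 0)%:E)) -
  fine (prodint (fun x => (Num.max (- u x) 0)%:E)).

Definition prodintC (h : Pt -> C) : C :=
  Complex (prodintR (fun x => complex.Re (h x))) (prodintR (fun x => complex.Im (h x))).

Variables alpha beta : Vprod -> R.

Definition fH (f : ('I_k -> T) -> C) (x : Pt) : C :=
  \prod_(w : Vprod)
     (cpow (f (proj w x)) (alpha w) * Num.conj (cpow (f (proj w x)) (beta w))).

Definition normH (f : ('I_k -> T) -> C) : C :=
  cpow (prodintC (fH f)) (hsize alpha beta)^-1.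

Definition LH (f : ('I_k -> T) -> C) : Prop :=
  kmeasurable f /\
  (prodint (fun x => (complex.Re (fH (fun y => (`|f y| : C)) x))%:E) < +oo)%E.

Definition seminorm_on (L : (('I_k -> T) -> C) -> Prop)
    (N : (('I_k -> T) -> C) -> C) : Prop :=
  [/\ forall f, L f -> 0 <= N f,
      forall f (c : C), L f -> L (fun y => c * f y) /\ N (fun y => c * f y) = `|c| * N f
    & forall f g, L f -> L g ->
        L (fun y => f y + g y) /\ N (fun y => f y + g y) <= N f + N g].

End HypergraphPairs.

Definition seminorming (R : realType) (k : nat) (V : 'I_k -> finType)
    (alpha beta : Vprod V -> R) : Prop :=
  forall (d : measure_display) (T : measurableType d)
         (mu : {measure set T -> \bar R}),
    sigma_finite setT mu ->
    seminorm_on (LH mu alpha beta) (normH mu alpha beta).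

(* Main.v *)
Require Import Defs.
From mathcomp Require Import all_boot all_order all_algebra.
From mathcomp Require Import all_classical all_reals all_analysis.
From mathcomp Require Import complex.
From mathcomp Require Import lra.
Import Order.TTheory GRing.Theory Num.Theory.
Local Open Scope ring_scope.
Section S.
Local Open Scope classical_set_scope.
Local Open Scope complex_scope.
Local Open Scope ring_scope.
Variable R : realType.
Variable k : nat.
Variable V : 'I_k -> finType.
Definition mub : {measure set bool -> \bar R} := measure_add (\d_false) (\d_true).

Local Notation PT := (Pt V bool).

Lemma mub_sf : sigma_finite setT mub.
Proof.
exists (fun _ => setT); first by rewrite bigcup_const.
move=> _; split => //. rewrite /mub /measure_add/= /msum 2!big_ord_recl/= big_ord0 adde0 !diracT -EFinD ltry //.
Qed.

Lemma iint_ge0 s (g : PT -> \bar R) x : (forall y, 0 <= g y)%E ->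
  (0 <= iint mub s g x)%E.
Proof.
move=> g0; elim: s x => [|j s IH] x /=; first exact: g0.
by apply: integral_ge0 => t _; apply: IH.
Qed.

Lemma iint_cons j s (g : PT -> \bar R) x : (forall y, 0 <= g y)%E ->
  iint mub (j :: s) g x = (iint mub s g (upd x j false) + iint mub s g (upd x j true))%E.
Proof.
move=> g0 /=; rewrite ge0_integral_measure_add //; last first.
  by move=> t _; apply: iint_ge0.
by rewrite !integral_dirac // !diracT !mul1e.
Qed.

Lemma iint_fin s (u : PT -> R) x : (forall y, 0 <= u y) ->
  iint mub s (fun y => (u y)%:E) x \is a fin_num.
Proof.
move=> u0; elim: s x => [|j s IH] x; first by [].
by rewrite iint_cons ?fin_numD ?IH // => y; rewrite lee_fin.
Qed.

Lemma iint_add s (g1 g2 : PT -> \bar R) x : (forall y, 0 <= g1 y)%E -> (forall y, 0 <= g2 y)%E ->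
  iint mub s (fun y => g1 y + g2 y)%E x = (iint mub s g1 x + iint mub s g2 x)%E.
Proof.
move=> h1 h2; elim: s x => [|j s IH] x; first by [].
rewrite !iint_cons // ?IH; first by rewrite addeACA.
by move=> y; apply: adde_ge0.
Qed.

Lemma iint_ge_pt (s : seq (Coord V)) (g : PT -> \bar R) (x x' : PT) : (forall y, 0 <= g y)%E ->
  (forall c : Coord V, c \notin s -> x' (tag c) (tagged c) = x (tag c) (tagged c)) ->
  (g x' <= iint mub s g x)%E.
Proof.
move=> g0; elim: s x => [|j s IH] x hx.
  have -> : x' = x; last by [].
  apply: functional_extensionality_dep => i; apply: functional_extensionality_dep => v.
  exact: (hx (Tagged V v)).
rewrite iint_cons //.
apply: (@le_trans _ _ (iint mub s g (upd x j (x' (tag j) (tagged j))))).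
  apply: IH => -[i v] cs; rewrite /upd /=.
  case: eqP => [e|/eqP cj]; first by rewrite -e.
  by apply: (hx (Tagged V v)); rewrite inE negb_or cs andbT.
case: (x' (tag j) (tagged j)).
  by rewrite leeDr // iint_ge0.
by rewrite leeDl // iint_ge0.
Qed.

Lemma prodintE : exists xb, forall g, prodint mub g = iint mub (enum {: Coord V}) g xb.
Proof.
rewrite /prodint; case: pselect => [H|H]; first by eexists.
by exfalso; apply: H; exists true.
Qed.

Lemma prodint0 : prodint mub (fun _ : PT => 0%E) = 0%E.
Proof.
have [xb ->] := prodintE.
elim: (enum _) xb => [|j s IH] x //.
by rewrite iint_cons // !IH adde0.
Qed.

Lemma prodint_fin (u : PT -> R) : (forall y, 0 <= u y) ->
  prodint mub (fun y => (u y)%:E) \is a fin_num.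
Proof. move=> u0; have [xb ->] := prodintE; exact: iint_fin. Qed.

Lemma prodintR_ge0 (u : PT -> R) : (forall y, 0 <= u y) ->
  prodintR mub u = fine (prodint mub (fun y => (u y)%:E)).
Proof.
move=> u0; rewrite /prodintR.
have -> : (fun x => (Num.max (u x) 0)%:E) = (fun y => (u y)%:E).
  by apply/funext => y; rewrite max_l.
have -> : (fun x => (Num.max (- u x) 0)%:E) = (fun _ => 0%E).
  by apply/funext => y; rewrite max_r // oppr_le0.
by rewrite prodint0 /= subr0.
Qed.

Lemma meas_pred (P : bool -> Prop) :
  <<s @cylk k _ bool >> [set y | P [forall i, y i]].
Proof.
have mE : <<s @cylk k _ bool >> [set y | [forall i, y i]].
  have -> : [set y : 'I_k -> bool | [forall i, y i]] =
      \bigcap_(i in [set: 'I_k]) [set y | [set true] (y i)].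
    apply/seteqP; split => y /=.
      by move=> /forallP h i _; apply: h.
    by move=> h; apply/forallP => i; exact: (h i I).
  apply: (@fin_bigcap_measurable _ (g_sigma_algebraType (@cylk k _ bool))).
    exact: finite_finset.
  move=> i _; apply: sub_sigma_algebra; exists i, [set true]; split => //.
case: (pselect (P true)) => pt; case: (pselect (P false)) => pf.
- have -> : [set y : 'I_k -> bool | P [forall i, y i]] = setT.
    by apply/seteqP; split => y //= _; case: [forall i, y i].
  by have := @sigma_algebraCD _ setT (@cylk k _ bool) set0 (@sigma_algebra0 _ _ _); rewrite setD0.
- have -> : [set y : 'I_k -> bool | P [forall i, y i]] = [set y | [forall i, y i]].
    by apply/seteqP; split => y /=; case: [forall i, y i].
  exact: mE.
- have -> : [set y : 'I_k -> bool | P [forall i, y i]] = ~` [set y | [forall i, y i]].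
    by apply/seteqP; split => y /=; case: [forall i, y i].
  exact: sigma_algebraC.
- have -> : [set y : 'I_k -> bool | P [forall i, y i]] = set0.
    by apply/seteqP; split => y //=; case: [forall i, y i].
  exact: (@sigma_algebra0 _ setT).
Qed.

Lemma cpow_real (r a : R) : 0 <= r -> cpow r%:C a = (r `^ a)%:C.
Proof.
move=> r0; rewrite /cpow.
have [->|rn0] := eqVneq r 0.
  rewrite eqxx /powR eqxx; by case: (a == 0).
have -> : (r%:C == 0) = false.
  by apply/negbTE; apply: contra rn0 => /eqP [] ->.
rewrite /carg /= lexx expr0n /= addr0 sqrtr_sqr ger0_norm // divff // acos1.
by rewrite mulr0 cos0 sin0 mulr1 mulr0.
Qed.

Variables alpha beta : Vprod V -> R.

Definition G (r : ('I_k -> bool) -> R) (x : PT) : R :=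
  \prod_(w : Vprod V) (r (Defs.proj w x) `^ alpha w * r (Defs.proj w x) `^ beta w).

Definition P r := fine (prodint mub (fun x => (G r x)%:E)).

Lemma G_ge0 r x : 0 <= G r x.
Proof. by apply: prodr_ge0 => w _; apply: mulr_ge0; apply: powR_ge0. Qed.

Lemma fH_real (r : ('I_k -> bool) -> R) x : (forall y, 0 <= r y) ->
  fH alpha beta (fun y => (r y)%:C) x = (G r x)%:C.
Proof.
move=> r0; rewrite /fH /G rmorph_prod; apply: eq_bigr => w _.
by rewrite !cpow_real // conj_Creal ?rmorphM // ger0_real // ler0c powR_ge0.
Qed.

Lemma P_ge0 r : 0 <= P r.
Proof. apply: fine_ge0; have [xb ->] := prodintE; apply: iint_ge0 => y; rewrite lee_fin; exact: G_ge0. Qed.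

Lemma normH_real (r : ('I_k -> bool) -> R) : (forall y, 0 <= r y) ->
  0 < hsize alpha beta ->
  normH mub alpha beta (fun y => (r y)%:C) = (P r `^ (hsize alpha beta)^-1)%:C.
Proof.
move=> r0 hs; rewrite /normH /prodintC.
have -> : (fun x => complex.Re (fH alpha beta (fun y => (r y)%:C) x)) = G r.
  by apply/funext => x; rewrite fH_real.
have -> : (fun x => complex.Im (fH alpha beta (fun y => (r y)%:C) x)) = (fun _ => 0).
  by apply/funext => x; rewrite fH_real.
rewrite !prodintR_ge0 //; last exact: G_ge0.
have -> : (fun _ : PT => (0:R)%:E) = (fun _ => 0%E) by [].
rewrite prodint0 /=.
have -> : (fine (prodint mub (fun y => (G r y)%:E)) +i* 0) = (P r)%:C by [].
by rewrite cpow_real // P_ge0.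
Qed.

Lemma LH_real (c1 c2 : R) : 0 <= c1 -> 0 <= c2 ->
  LH mub alpha beta (fun y => (if [forall i, y i] then c1 else c2)%:C).
Proof.
move=> h1 h2; set r := fun y : 'I_k -> bool => if [forall i, y i] then c1 else c2.
have r0 : forall y, 0 <= r y by move=> y; rewrite /r; case: ifP.
split.
  move=> B _; split.
    exact: (meas_pred (fun b => B (if b then c1 else c2))).
  exact: (meas_pred (fun _ => B 0)).
have -> : (fun y => (`|(r y)%:C| : R[i])) = (fun y => (r y)%:C).
  by apply/funext => y; rewrite ger0_norm // ler0c.
have -> : (fun x => (complex.Re (fH alpha beta (fun y => (r y)%:C) x))%:E) = (fun x => (G r x)%:E).
  by apply/funext => x; rewrite fH_real.
have /fin_numPlt/andP[_ h] := @prodint_fin (G r) (@G_ge0 r). exact: h.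
Qed.

Lemma prodint_ge_pt (g : PT -> \bar R) x' : (forall y, 0 <= g y)%E ->
  (g x' <= prodint mub g)%E.
Proof.
move=> g0; have [xb ->] := prodintE; apply: iint_ge_pt => // c.
by rewrite mem_enum.
Qed.

Lemma P_ge_pt r x' : G r x' <= P r.
Proof.
rewrite -lee_fin /P fineK; last exact: prodint_fin (@G_ge0 r).
by apply: prodint_ge_pt => y; rewrite lee_fin G_ge0.
Qed.

Lemma P_mono_pt r1 r2 x' : (forall x, G r1 x <= G r2 x) ->
  P r1 + (G r2 x' - G r1 x') <= P r2.
Proof.
move=> h12.
have d0 : forall x, 0 <= G r2 x - G r1 x by move=> x; rewrite subr_ge0.
have E : (fun x => (G r2 x)%:E) = (fun x => ((G r1 x)%:E + (G r2 x - G r1 x)%:E)%E).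
  by apply/funext => x; rewrite -EFinD addrCA subrr addr0.
have E2 : prodint mub (fun x => (G r2 x)%:E) =
   (prodint mub (fun x => (G r1 x)%:E) + prodint mub (fun x => (G r2 x - G r1 x)%:E))%E.
  rewrite E; have [xb E0] := prodintE; rewrite !E0 iint_add // => y; by rewrite lee_fin ?G_ge0 ?d0.
rewrite -lee_fin /P [X in (_ <= X)%E]fineK; last exact: prodint_fin (@G_ge0 r2).
rewrite E2 EFinD fineK; last exact: prodint_fin (@G_ge0 r1).
rewrite leeD2l //; apply: prodint_ge_pt => y; rewrite lee_fin; exact: d0.
Qed.

Definition rt (t : R) (y : 'I_k -> bool) : R := if [forall i, y i] then t else 1.
Definition x0 (w0 : Vprod V) : PT := fun i v => v == w0 i.

Lemma proj_x0 w w0 : [forall i, Defs.proj w (x0 w0) i] = (w == w0).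
Proof.
apply/forallP/eqP => [h|->]; last by move=> i; rewrite /Defs.proj /x0 eqxx.
by apply/ffunP => i; apply/eqP; apply: h.
Qed.

Lemma G_x0 t w0 : G (rt t) (x0 w0) = t `^ alpha w0 * t `^ beta w0.
Proof.
rewrite /G (bigD1 w0) //= big1 ?mulr1.
  by rewrite /rt proj_x0 eqxx.
by move=> w /negbTE hw; rewrite /rt proj_x0 hw powR1 mulr1.
Qed.

Lemma G_allfalse (hk : (0 < k)%N) t : G (rt t) (fun _ _ => false) = 1.
Proof.
rewrite /G big1 // => w _; rewrite /rt.
have -> : [forall i, Defs.proj w (fun (i : 'I_k) (_ : V i) => false) i] = false.
  by apply/negbTE/forallPn; exists (Ordinal hk).
by rewrite powR1 mulr1.
Qed.

Lemma powR0_le (t a : R) : 0 <= t -> 0 `^ a <= t `^ a.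
Proof.
move=> t0; have [->|a0] := eqVneq a 0; first by rewrite !powRr0.
by rewrite powR0 // powR_ge0.
Qed.

Lemma G_mono t x : 0 <= t -> G (rt 0) x <= G (rt t) x.
Proof.
move=> t0; apply: ler_prod => w _; rewrite /rt.
case: ([forall i, Defs.proj w x i]); last by rewrite powR1 /= mulr1 ler01 lexx.
by rewrite mulr_ge0 ?powR_ge0 //= ler_pM ?powR_ge0 ?powR0_le.
Qed.

End S.

Arguments rt {R k}.
Arguments G {R k V}.
Arguments P {R k V}.
Arguments x0 {k V}.
Arguments LH_real {R k V}.
Arguments normH_real {R k V}.
Arguments P_ge_pt {R k V}.
Arguments G_x0 {R k V}.
Arguments G_mono {R k V}.
Arguments G_allfalse {R k V}.
Arguments P_ge0 {R k V}.

Section K.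
Variable R : realType.

Lemma expR_bound (x : R) : expR x <= 1 + x * expR x.
Proof.
have h := expR_ge1Dx (- x); rewrite expRN in h.
have e0 := expR_gt0 x.
have : (1 - x) * expR x <= 1.
  by rewrite -[leRHS](@mulVf _ (expR x)) ?gt_eqF // ler_pM2r.
lra.
Qed.

Lemma powR_bound (S u : R) : 0 <= S -> 0 <= u -> (1 + u) `^ S <= expR (S * u).
Proof.
move=> S0 u0; rewrite /powR gt_eqF; last lra.
rewrite ler_expR; apply: ler_wpM2l => //.
rewrite -[leRHS]expRK ler_ln ?posrE ?expR_gt0 ?expR_ge1Dx //; lra.
Qed.
Lemma key (a S g n1 : R) : 1 <= a -> 0 < S -> 0 < g -> g < 1 -> 0 <= n1 ->
  (forall t, 0 < t -> t <= 1 -> (a + t `^ g) `^ S^-1 <= a `^ S^-1 + t * n1) -> False.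
Proof.
move=> a1 S0 g0 g1 n10 h.
set n0 := a `^ S^-1.
have n0p : 0 < n0 by apply: powR_gt0; lra.
set c := S * n1 / n0.
have c0 : 0 <= c by apply: divr_ge0 => //; [apply: mulr_ge0; lra | lra].
set K := a * c * expR c.
have K0 : 0 <= K by apply: mulr_ge0; [apply: mulr_ge0; lra | exact: expR_ge0].
have step : forall t, 0 < t -> t <= 1 -> t `^ g <= K * t.
  move=> t t0 t1.
  have tg0 : 0 <= t `^ g := powR_ge0 _ _.
  have h1 := h t t0 t1.
  have h2 : (a + t `^ g) <= (n0 + t * n1) `^ S.
    have hy : 0 <= n0 + t * n1.
      apply: addr_ge0; [exact: ltW n0p | exact: mulr_ge0 (ltW t0) n10].
    have := @ge0_ler_powR _ S (ltW S0) _ _ (powR_ge0 _ _) hy h1.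
    rewrite -powRrM mulVf ?gt_eqF // powRr1 //; lra.
  set u := t * n1 / n0.
  have u0 : 0 <= u by apply: divr_ge0; [exact: mulr_ge0 (ltW t0) n10| lra].
  have e1 : n0 + t * n1 = n0 * (1 + u).
    by rewrite /u mulrDr mulr1 mulrCA mulfV ?gt_eqF // mulr1.
  have e2 : n0 `^ S = a by rewrite /n0 -powRrM mulVf ?gt_eqF // powRr1 //; lra.
  rewrite e1 powRM in h2; [rewrite e2 in h2|exact: ltW n0p|lra].
  have h3 := @powR_bound S u (ltW S0) u0.
  have e3 : S * u = t * c by rewrite /u /c !mulrA (mulrC S t).
  rewrite e3 in h3.
  have h4 := expR_bound (t * c).
  have h5 : expR (t * c) <= expR c.
    rewrite ler_expR -[leRHS]mul1r; exact: ler_wpM2r.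
  have ea : 0 <= expR (t * c) := expR_ge0 _.
  have : t `^ g <= a * (t * c * expR (t * c)).
    have : a * (1 + u) `^ S <= a * (1 + t * c * expR (t * c)).
      apply: ler_wpM2l; [lra | exact: le_trans h3 h4].
    lra.
  move=> h6; apply: (le_trans h6); rewrite /K.
  have : t * c * expR (t * c) <= t * c * expR c.
    apply: ler_wpM2l => //; exact: mulr_ge0 (ltW t0) c0.
  have : 0 <= a by lra.
  nra.
set d := 1 - g.
have d0 : 0 < d by rewrite /d; lra.
set t := (K + 1) `^ (- d^-1).
have K1 : 1 <= K + 1 by lra.
have tp : 0 < t by apply: powR_gt0; lra.
have t1 : t <= 1.
  rewrite /t powRN invf_le1; last by apply: powR_gt0; lra.
  rewrite -[leLHS](powRr0 (K + 1)); apply: ler_powR => //.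
  by rewrite invr_ge0 ltW.
have := step t tp t1.
have -> : g = 1 + (- d) by rewrite /d; lra.
rewrite powRD; last by rewrite (gt_eqF tp) implybT.
rewrite powRr1; last exact: ltW.
have -> : t `^ (- d) = K + 1.
  rewrite /t -powRrM mulNr mulrN opprK mulVf ?gt_eqF // powRr1 //; lra.
nra.
Qed.
End K.

Local Open Scope complex_scope.
Local Open Scope ring_scope.

Theorem corollary2p6 (R : realType) (k : nat) (V : 'I_k -> finType)
    (alpha beta : Vprod V -> R) :
  (0 < k)%N ->
  (forall i : 'I_k, (0 < #|V i|)%N) ->
  (forall w, 0 <= alpha w) -> (forall w, 0 <= beta w) ->
  seminorming alpha beta ->
  forall w : Vprod V, (alpha w != 0) || (beta w != 0) ->
    1 <= alpha w + beta w.
Proof.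
move=> hk hV ha hb hsemi w0 hw.
have g0 : 0 < alpha w0 + beta w0.
  have := ha w0; have := hb w0; move: hw => /orP[] h; rewrite lt_neqAle.
    move=> hb0 ha0; rewrite addr_ge0 // andbT eq_sym; apply: contra h => /eqP h.
    by apply/eqP; apply: le_anti; rewrite ha0 andbT -h lerDl.
  move=> hb0 ha0; rewrite addr_ge0 // andbT eq_sym; apply: contra h => /eqP h.
  by apply/eqP; apply: le_anti; rewrite hb0 andbT -h lerDr.
set S := hsize alpha beta.
have S0 : 0 < S.
  rewrite /S /hsize (bigD1 w0) //=.
  have : 0 <= \sum_(i | i != w0) (`|alpha i| + `|beta i|).
    by apply: sumr_ge0 => w _; apply: addr_ge0.
  rewrite !ger0_norm //; lra.
rewrite leNgt; apply/negP => hlt.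
have [hpos hhom htri] := hsemi _ _ (@mub R) (@mub_sf R).
have rt0 : forall t (y : 'I_k -> bool), 0 <= t -> 0 <= rt t y.
  by move=> t y t0; rewrite /rt; case: ifP.
have LHt : forall t, 0 <= t -> LH (@mub R) alpha beta (fun y => (rt t y)%:C%C).
  by move=> t t0; apply: LH_real.
have NE : forall t, 0 <= t -> normH (@mub R) alpha beta (fun y => (rt t y)%:C%C)
    = (P alpha beta (rt t) `^ S^-1)%:C.
  by move=> t t0; apply: normH_real => // y; apply: rt0.
have conv : forall t, 0 <= t -> t <= 1 ->
    P alpha beta (rt t) `^ S^-1 <=
    (1 - t) * P alpha beta (rt 0) `^ S^-1 + t * P alpha beta (rt 1) `^ S^-1.
  move=> t t0 t1.
  have [L0 N0] := hhom _ ((1 - t)%:C%C) (LHt 0 (lexx 0)).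
  have [L1 N1] := hhom _ (t%:C) (LHt 1 ler01).
  have [_ T] := htri _ _ L0 L1.
  have E : (fun y : 'I_k -> bool => (1 - t)%:C%C * (rt 0 y)%:C%C + t%:C * (rt 1 y)%:C%C) =
           (fun y : 'I_k -> bool => (rt t y)%:C%C).
    apply/funext => y; rewrite -!rmorphM -rmorphD /rt; congr (_%:C).
    by case: ifP => _; rewrite ?mulr0 ?add0r !mulr1 ?subrK.
  rewrite E N0 N1 !NE // ?ler01 // in T.
  rewrite !ger0_norm ?ler0c ?subr_ge0 // in T.
  by rewrite -!rmorphM -rmorphD lecR in T.
set a := P alpha beta (rt 0).
have a1 : 1 <= a.
  by rewrite -(G_allfalse alpha beta hk 0); apply: P_ge_pt.
have n10 : 0 <= P alpha beta (rt 1) `^ S^-1 by apply: powR_ge0.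
apply: (@key R a S (alpha w0 + beta w0) (P alpha beta (rt 1) `^ S^-1) a1 S0 g0 hlt n10).
move=> t tp t1.
have hP : a + t `^ (alpha w0 + beta w0) <= P alpha beta (rt t).
  have := @P_mono_pt R k V alpha beta (rt 0) (rt t) (x0 w0) (fun x => G_mono alpha beta t x (ltW tp)).
  have Z : 0 `^ alpha w0 * 0 `^ beta w0 = 0.
    by move: hw => /orP[] h; [rewrite (powR0 h) mul0r | rewrite (powR0 h) mulr0].
  rewrite !G_x0 Z subr0 -powRD //.
  by rewrite (gt_eqF tp) implybT.
apply: (le_trans _ (le_trans (conv t (ltW tp) t1) _)).
  apply: ge0_ler_powR => //.
  - by rewrite invr_ge0 ltW.
  - by rewrite nnegrE; apply: addr_ge0; [lra | apply: powR_ge0].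
  - by rewrite nnegrE; exact: P_ge0.
rewrite lerD2r -[leRHS]mul1r ler_wpM2r ?powR_ge0 //; lra.
Qed.
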